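(* Let $F$ be a real quadratic field, let $k_1,k_2$ be integers and let $g:\mathbb{H}^2\to\mathbb{C}$ be a smooth Hilbert modular form of weight $(k_1,k_2)$ for some congruence subgroup of $\operatorname{SL}_2(F)$. Assume that, as a function of the first variable, $g$ is annihilated by $\Delta_{k_1}$ and, as a function of the second variable, $g$ is annihilated by $\Delta_{k_2}$. Then for every non-negative integer $j$, \[ (-4\pi)^jL(\mathcal{C}_j(g))=\binom{k_2+j-1}{j}(R^j_{k_1,1}L_{k_2,2}g)(\tau,\tau)+(-1)^j\binom{k_1+j-1}{j}(L_{k_1,1}R^j_{k_2,2}g)(\tau,\tau). \]
   Context: For $\tau=u+iv$: $R_k=2i\partial_\tau+kv^{-1}$, $L=L_k=-2iv^2\partial_{\bar\tau}$, $R^j_k=R_{k+2j-2}\circ\cdots\circ R_k$, $\Delta_k=-v^2(\partial_u^2+\partial_v^2)+ikv(\partial_u+i\partial_v)$. $R_{k,i}$, $L_{k,i}$ and $R^j_{k,i}$ denote these operators acting in the variable $\tau_i$ of $(\tau_1,\tau_2)\in\mathbb{H}^2$. The $j$-th Cohen operator is $\mathcal{C}_j(g)(\tau)=(2\pi i)^{-j}\sum_{s=0}^j(-1)^s\binom{k_1+j-1}{s}\binom{k_2+j-1}{j-s}\left(\partial_{\tau_1}^{j-s}\partial_{\tau_2}^s g\right)(\tau,\tau)$, a function of $\tau\in\mathbb{H}$. Binomial coefficients $\binom{x}{s}=x(x-1)\cdots(x-s+1)/s!$. *)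

(* Defs.v *)
From Stdlib Require Import Reals ZArith List.
From Coquelicot Require Import Coquelicot.
Open Scope R_scope.

Definition Czpow (z : C) (k : Z) : C :=
  match k with
  | Z0 => RtoC 1
  | Zpos p => Cpow z (Pos.to_nat p)
  | Zneg p => Cinv (Cpow z (Pos.to_nat p))
  end.

Fixpoint falling (x : R) (s : nat) : R :=
  match s with
  | O => 1
  | S s' => falling x s' * (x - INR s')
  end.
Definition gbinom (x : R) (s : nat) : R := falling x s / INR (fact s).

(* Derivative of a complex-valued function of one real variable, taken
   componentwise (total operator, correct whenever the function is differentiable). *)
Definition dC (h : R -> C) (x : R) : C :=
  (Derive (fun t => Re (h t)) x, Derive (fun t => Im (h t)) x).
Definition ex_dC (h : R -> C) (x : R) : Prop :=
  ex_derive (fun t => Re (h t)) x /\ ex_derive (fun t => Im (h t)) x.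

Definition inH (t : C) : Prop := 0 < Im t.

Definition du (h : C -> C) : C -> C := fun t => dC (fun x => h (x, Im t)) (Re t).
Definition dv (h : C -> C) : C -> C := fun t => dC (fun y => h (Re t, y)) (Im t).
Definition dtau (h : C -> C) : C -> C :=
  fun t => (RtoC (/2) * (du h t - Ci * dv h t))%C.
Definition dtaubar (h : C -> C) : C -> C :=
  fun t => (RtoC (/2) * (du h t + Ci * dv h t))%C.
Definition Lop (h : C -> C) : C -> C :=
  fun t => (RtoC (-2) * Ci * RtoC (Im t ^ 2) * dtaubar h t)%C.

Inductive dir := U1 | V1 | U2 | V2.

Definition line (d : dir) (f : C -> C -> C) (a b : C) : R -> C :=
  match d with
  | U1 => fun x => f (x, Im a) b
  | V1 => fun y => f (Re a, y) b
  | U2 => fun x => f a (x, Im b)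
  | V2 => fun y => f a (Re b, y)
  end.
Definition coord (d : dir) (a b : C) : R :=
  match d with U1 => Re a | V1 => Im a | U2 => Re b | V2 => Im b end.
Definition pd (d : dir) (f : C -> C -> C) : C -> C -> C :=
  fun a b => dC (line d f a b) (coord d a b).
Definition iterD (ds : list dir) (f : C -> C -> C) : C -> C -> C :=
  fold_right pd f ds.

Definition inH2 (a b : C) : Prop := inH a /\ inH b.

Definition smooth_H2 (f : C -> C -> C) : Prop :=
  forall (ds : list dir) (a b : C), inH2 a b ->
    continuous (fun p : C * C => iterD ds f (fst p) (snd p)) (a, b) /\
    forall d : dir, ex_dC (line d (iterD ds f) a b) (coord d a b).

Definition dtau1 (f : C -> C -> C) : C -> C -> C :=
  fun a b => (RtoC (/2) * (pd U1 f a b - Ci * pd V1 f a b))%C.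
Definition dtaubar1 (f : C -> C -> C) : C -> C -> C :=
  fun a b => (RtoC (/2) * (pd U1 f a b + Ci * pd V1 f a b))%C.
Definition dtau2 (f : C -> C -> C) : C -> C -> C :=
  fun a b => (RtoC (/2) * (pd U2 f a b - Ci * pd V2 f a b))%C.
Definition dtaubar2 (f : C -> C -> C) : C -> C -> C :=
  fun a b => (RtoC (/2) * (pd U2 f a b + Ci * pd V2 f a b))%C.

Definition R1 (k : Z) (f : C -> C -> C) : C -> C -> C :=
  fun a b => (RtoC 2 * Ci * dtau1 f a b + RtoC (IZR k / Im a) * f a b)%C.
Definition R2 (k : Z) (f : C -> C -> C) : C -> C -> C :=
  fun a b => (RtoC 2 * Ci * dtau2 f a b + RtoC (IZR k / Im b) * f a b)%C.
Definition L1 (f : C -> C -> C) : C -> C -> C :=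
  fun a b => (RtoC (-2) * Ci * RtoC (Im a ^ 2) * dtaubar1 f a b)%C.
Definition L2 (f : C -> C -> C) : C -> C -> C :=
  fun a b => (RtoC (-2) * Ci * RtoC (Im b ^ 2) * dtaubar2 f a b)%C.

Fixpoint Rit1 (k : Z) (j : nat) (f : C -> C -> C) : C -> C -> C :=
  match j with
  | O => f
  | S j' => R1 (k + 2 * Z.of_nat j') (Rit1 k j' f)
  end.
Fixpoint Rit2 (k : Z) (j : nat) (f : C -> C -> C) : C -> C -> C :=
  match j with
  | O => f
  | S j' => R2 (k + 2 * Z.of_nat j') (Rit2 k j' f)
  end.

Definition Delta1 (k : Z) (f : C -> C -> C) : C -> C -> C :=
  fun a b =>
    (RtoC (- Im a ^ 2) * (pd U1 (pd U1 f) a b + pd V1 (pd V1 f) a b)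
     + Ci * RtoC (IZR k * Im a) * (pd U1 f a b + Ci * pd V1 f a b))%C.
Definition Delta2 (k : Z) (f : C -> C -> C) : C -> C -> C :=
  fun a b =>
    (RtoC (- Im b ^ 2) * (pd U2 (pd U2 f) a b + pd V2 (pd V2 f) a b)
     + Ci * RtoC (IZR k * Im b) * (pd U2 f a b + Ci * pd V2 f a b))%C.

Fixpoint dtau2n (n : nat) (f : C -> C -> C) : C -> C -> C :=
  match n with O => f | S n' => dtau2 (dtau2n n' f) end.
Fixpoint dtau1n (m : nat) (f : C -> C -> C) : C -> C -> C :=
  match m with O => f | S m' => dtau1 (dtau1n m' f) end.

Definition Cohen (k1 k2 : Z) (j : nat) (g : C -> C -> C) : C -> C :=
  fun t =>
    (Cinv (Cpow (RtoC (2 * PI) * Ci) j) *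
     fold_right Cplus (RtoC 0)
       (map (fun s : nat =>
          RtoC ((-1) ^ s * gbinom (IZR k1 + INR j - 1) s
                         * gbinom (IZR k2 + INR j - 1) (j - s))
          * dtau1n (j - s) (dtau2n s g) t t)
          (seq 0 (S j))))%C.

(* D squarefree, D > 1; every real quadratic field is of this form. *)
Definition squarefreeZ (D : Z) : Prop :=
  forall m : Z, (m * m | D)%Z -> (m * m = 1)%Z.

(* Z-basis {1, omega} of the ring of integers O_F, in the two real embeddings *)
Definition omega1 (D : Z) : R :=
  if Z.eqb (Z.modulo D 4) 1 then (1 + sqrt (IZR D)) / 2 else sqrt (IZR D).
Definition omega2 (D : Z) : R :=
  if Z.eqb (Z.modulo D 4) 1 then (1 - sqrt (IZR D)) / 2 else - sqrt (IZR D).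

(* an element a + b*omega of O_F is represented by (a,b) : Z * Z *)
Definition OF := (Z * Z)%type.
Definition emb1 (D : Z) (x : OF) : R := IZR (fst x) + IZR (snd x) * omega1 D.
Definition emb2 (D : Z) (x : OF) : R := IZR (fst x) + IZR (snd x) * omega2 D.

Definition congOF (N : Z) (x : OF) (e : Z) : Prop :=
  (N | fst x - e)%Z /\ (N | snd x)%Z.

Definition inGammaN (D N : Z) (a b c d : OF) : Prop :=
  emb1 D a * emb1 D d - emb1 D b * emb1 D c = 1 /\
  emb2 D a * emb2 D d - emb2 D b * emb2 D c = 1 /\
  congOF N a 1 /\ congOF N b 0 /\ congOF N c 0 /\ congOF N d 1.

Definition mobius (a b c d : R) (t : C) : C :=
  ((RtoC a * t + RtoC b) / (RtoC c * t + RtoC d))%C.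

Definition modular_GammaN (D N k1 k2 : Z) (g : C -> C -> C) : Prop :=
  forall a b c d : OF, inGammaN D N a b c d ->
  forall t1 t2 : C, inH2 t1 t2 ->
    g (mobius (emb1 D a) (emb1 D b) (emb1 D c) (emb1 D d) t1)
      (mobius (emb2 D a) (emb2 D b) (emb2 D c) (emb2 D d) t2)
    = (Czpow (RtoC (emb1 D c) * t1 + RtoC (emb1 D d)) k1
       * Czpow (RtoC (emb2 D c) * t2 + RtoC (emb2 D d)) k2
       * g t1 t2)%C.

(* smooth Hilbert modular form of weight (k1,k2) for some congruence subgroup
   (every congruence subgroup contains some Gamma(N), N a positive integer) *)
Definition smooth_HMF (D k1 k2 : Z) (g : C -> C -> C) : Prop :=
  smooth_H2 g /\ exists N : Z, (0 < N)%Z /\ modular_GammaN D N k1 k2 g.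

(* Main.v *)
Require Import Defs.
From Stdlib Require Import Reals ZArith List Lia Lra Psatz FunctionalExtensionality.
From Coquelicot Require Import Coquelicot.
Open Scope R_scope.

Definition cont4 (F : C -> C -> C) (a b : C) : Prop :=
  forall eps : posreal, exists delta : posreal, forall a' b' : C,
    Rabs (Re a' - Re a) < delta -> Rabs (Im a' - Im a) < delta ->
    Rabs (Re b' - Re b) < delta -> Rabs (Im b' - Im b) < delta ->
    Cmod (F a' b' - F a b)%C < eps.

Lemma Cmod_le_sum (z : C) : Cmod z <= Rabs (Re z) + Rabs (Im z).
Proof.
  destruct z as [x y]. unfold Cmod, Re, Im; simpl.
  apply Rsqr_incr_0_var.
  - rewrite Rsqr_sqrt by nra. unfold Rsqr.
    pose proof (Rabs_pos x); pose proof (Rabs_pos y).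
    replace (x*(x*1) + y*(y*1)) with (Rabs x * Rabs x + Rabs y * Rabs y).
    + nra.
    + rewrite <- !Rabs_mult. rewrite !Rabs_right by nra. ring.
  - pose proof (Rabs_pos x); pose proof (Rabs_pos y); lra.
Qed.

Lemma cont_to_cont4 (F : C -> C -> C) (a b : C) :
  continuous (fun p : C * C => F (fst p) (snd p)) (a, b) -> cont4 F a b.
Proof.
  intros H eps.
  assert (He : 0 < eps / 2) by (destruct eps; simpl; lra).
  destruct (proj1 (filterlim_locally _ _) H (mkposreal _ He)) as [delta Hd].
  exists delta. intros a' b' h1 h2 h3 h4.
  specialize (Hd (a', b')).
  assert (Hb : ball (a, b) delta (a', b')).
  { hnf. simpl. split; hnf; simpl; split; assumption. }
  specialize (Hd Hb). destruct Hd as [Hr Hi]. simpl in Hr, Hi.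
  eapply Rle_lt_trans. apply Cmod_le_sum.
  unfold AbsRing_ball, abs, minus, plus, opp in Hr, Hi. simpl in Hr, Hi.
  change (Rabs (fst (F a' b') - fst (F a b)) < eps/2) in Hr.
  change (Rabs (snd (F a' b') - snd (F a b)) < eps/2) in Hi.
  unfold Re, Im. simpl. unfold Rminus in Hr, Hi. lra.
Qed.

Definition is_dC (h : R -> C) (x : R) (l : C) : Prop :=
  is_derive (fun t => Re (h t)) x (Re l) /\ is_derive (fun t => Im (h t)) x (Im l).

Lemma is_dC_unique h x l : is_dC h x l -> dC h x = l.
Proof. intros [H1 H2]. destruct l as [l1 l2]. unfold dC. f_equal; apply is_derive_unique; assumption. Qed.

Lemma ex_dC_is h x : ex_dC h x -> is_dC h x (dC h x).
Proof. intros [H1 H2]. split; apply Derive_correct; assumption. Qed.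

Lemma is_dC_ex h x l : is_dC h x l -> ex_dC h x.
Proof. intros [H1 H2]; split; eexists; eassumption. Qed.

Lemma isd_plus (f g : R -> R) x df dg : is_derive f x df -> is_derive g x dg ->
  is_derive (fun t => f t + g t) x (df + dg).
Proof. intros; apply (is_derive_plus f g); auto. Qed.
Lemma isd_minus (f g : R -> R) x df dg : is_derive f x df -> is_derive g x dg ->
  is_derive (fun t => f t - g t) x (df - dg).
Proof. intros; apply (is_derive_minus f g); auto. Qed.
Lemma isd_mult (f g : R -> R) x df dg : is_derive f x df -> is_derive g x dg ->
  is_derive (fun t => f t * g t) x (df * g x + f x * dg).
Proof. intros; apply (is_derive_mult f g); auto. apply Rmult_comm. Qed.
Lemma isd_const (c x : R) : is_derive (fun _ => c) x 0.
Proof. apply (is_derive_const c x). Qed.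

Lemma is_dC_plus f g x l1 l2 : is_dC f x l1 -> is_dC g x l2 ->
  is_dC (fun t => (f t + g t)%C) x (l1 + l2)%C.
Proof. intros [H1 H2] [H3 H4]; split.
  - apply (isd_plus (fun t => Re (f t)) (fun t => Re (g t))); auto.
  - apply (isd_plus (fun t => Im (f t)) (fun t => Im (g t))); auto.
Qed.

Lemma is_dC_mult f g x l1 l2 : is_dC f x l1 -> is_dC g x l2 ->
  is_dC (fun t => (f t * g t)%C) x (l1 * g x + f x * l2)%C.
Proof. intros [H1 H2] [H3 H4]; split.
  - apply (is_derive_ext (fun t => Re (f t) * Re (g t) - Im (f t) * Im (g t))).
    { intros; reflexivity. }
    replace (Re (l1 * g x + f x * l2)%C) with
     ((Re l1 * Re (g x) + Re (f x) * Re l2) - (Im l1 * Im (g x) + Im (f x) * Im l2))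
     by (destruct l1, l2, (f x), (g x); simpl; ring).
    apply isd_minus; apply isd_mult; auto.
  - apply (is_derive_ext (fun t => Re (f t) * Im (g t) + Im (f t) * Re (g t))).
    { intros; reflexivity. }
    replace (Im (l1 * g x + f x * l2)%C) with
     ((Re l1 * Im (g x) + Re (f x) * Im l2) + (Im l1 * Re (g x) + Im (f x) * Re l2))
     by (destruct l1, l2, (f x), (g x); simpl; ring).
    apply isd_plus; apply isd_mult; auto.
Qed.

Lemma is_dC_const (c : C) x : is_dC (fun _ => c) x (RtoC 0).
Proof. split; apply isd_const. Qed.

Lemma is_dC_RtoC (f : R -> R) x l : is_derive f x l -> is_dC (fun t => RtoC (f t)) x (RtoC l).
Proof. intros H; split. exact H. simpl. apply isd_const. Qed.

Lemma is_dC_ext_loc (h1 h2 : R -> C) x l :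
  (exists eps : posreal, forall y, Rabs (y - x) < eps -> h1 y = h2 y) ->
  is_dC h1 x l -> is_dC h2 x l.
Proof.
  intros [eps He] [H1 H2]; split; eapply is_derive_ext_loc; try eassumption;
  exists eps; intros y Hy; rewrite He; try reflexivity; exact Hy.
Qed.

Lemma dC_ext_loc (h1 h2 : R -> C) x :
  (exists eps : posreal, forall y, Rabs (y - x) < eps -> h1 y = h2 y) ->
  dC h1 x = dC h2 x.
Proof.
  intros [eps He]. unfold dC. f_equal; apply Derive_ext_loc;
  exists eps; intros y Hy; rewrite He; try reflexivity; exact Hy.
Qed.

Lemma ex_dC_ext_loc (h1 h2 : R -> C) x :
  (exists eps : posreal, forall y, Rabs (y - x) < eps -> h1 y = h2 y) ->
  ex_dC h1 x -> ex_dC h2 x.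
Proof.
  intros He Hx. apply ex_dC_is in Hx. eapply is_dC_ex, is_dC_ext_loc; eauto.
Qed.

Definition upd (d : dir) (a b : C) (x : R) : C * C :=
  match d with
  | U1 => ((x, Im a), b) | V1 => ((Re a, x), b)
  | U2 => (a, (x, Im b)) | V2 => (a, (Re b, x)) end.

Lemma line_eq d f a b : line d f a b = fun x => f (fst (upd d a b x)) (snd (upd d a b x)).
Proof. destruct d; reflexivity. Qed.

Lemma upd_coord d a b : upd d a b (coord d a b) = (a, b).
Proof. destruct a, b, d; reflexivity. Qed.

Lemma upd_fst d a b : fst (upd d a b (coord d a b)) = a.
Proof. destruct a, b, d; reflexivity. Qed.
Lemma upd_snd d a b : snd (upd d a b (coord d a b)) = b.
Proof. destruct a, b, d; reflexivity. Qed.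

Lemma upd_inH2 d a b : inH2 a b -> exists eps : posreal, forall x,
  Rabs (x - coord d a b) < eps -> inH2 (fst (upd d a b x)) (snd (upd d a b x)).
Proof.
  intros [Ha Hb]. unfold inH in *.
  destruct d.
  - exists (mkposreal 1 Rlt_0_1). intros; split; unfold inH; simpl; auto.
  - exists (mkposreal _ Ha). intros x Hx; split; unfold inH; simpl in *; auto.
    apply Rabs_def2 in Hx. lra.
  - exists (mkposreal 1 Rlt_0_1). intros; split; unfold inH; simpl; auto.
  - exists (mkposreal _ Hb). intros x Hx; split; unfold inH; simpl in *; auto.
    apply Rabs_def2 in Hx. lra.
Qed.

Definition eqH (f g : C -> C -> C) : Prop := forall a b, inH2 a b -> f a b = g a b.

Lemma eqH_refl f : eqH f f. Proof. intros a b _; reflexivity. Qed.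
Lemma eqH_sym f g : eqH f g -> eqH g f. Proof. intros H a b h; symmetry; auto. Qed.
Lemma eqH_trans f g h : eqH f g -> eqH g h -> eqH f h.
Proof. intros H1 H2 a b h'; rewrite H1; auto. Qed.

Lemma pd_ext d f g : eqH f g -> eqH (pd d f) (pd d g).
Proof.
  intros H a b Hab. unfold pd. apply dC_ext_loc.
  destruct (upd_inH2 d a b Hab) as [eps He]. exists eps. intros y Hy.
  rewrite !line_eq. apply H. apply He; auto.
Qed.

Lemma ex_line_ext d f g a b : eqH f g -> inH2 a b ->
  ex_dC (line d f a b) (coord d a b) -> ex_dC (line d g a b) (coord d a b).
Proof.
  intros H Hab. apply ex_dC_ext_loc.
  destruct (upd_inH2 d a b Hab) as [eps He]. exists eps. intros y Hy.
  rewrite !line_eq. apply H. apply He; auto.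
Qed.

Definition exL d (f : C -> C -> C) a b := ex_dC (line d f a b) (coord d a b).

Lemma exL_is d f a b : exL d f a b ->
  is_dC (fun x => f (fst (upd d a b x)) (snd (upd d a b x))) (coord d a b) (pd d f a b).
Proof. unfold exL, pd. rewrite line_eq. apply ex_dC_is. Qed.

Lemma is_exL d f a b l :
  is_dC (fun x => f (fst (upd d a b x)) (snd (upd d a b x))) (coord d a b) l -> exL d f a b.
Proof. unfold exL. rewrite line_eq. apply is_dC_ex. Qed.

Lemma is_pd d f a b l :
  is_dC (fun x => f (fst (upd d a b x)) (snd (upd d a b x))) (coord d a b) l -> pd d f a b = l.
Proof. unfold pd. rewrite line_eq. apply is_dC_unique. Qed.

Lemma exL_ext d f g a b : eqH f g -> inH2 a b -> exL d f a b -> exL d g a b.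
Proof. apply ex_line_ext. Qed.

Lemma is_pd_plus d f g a b : exL d f a b -> exL d g a b ->
  is_dC (fun x => (fun a b => f a b + g a b)%C (fst (upd d a b x)) (snd (upd d a b x)))
    (coord d a b) (pd d f a b + pd d g a b)%C.
Proof. intros H1 H2. apply is_dC_plus; apply exL_is; auto. Qed.

Lemma pd_plus d f g a b : exL d f a b -> exL d g a b ->
  pd d (fun a b => f a b + g a b)%C a b = (pd d f a b + pd d g a b)%C.
Proof. intros; apply is_pd, is_pd_plus; auto. Qed.

Lemma exL_plus d f g a b : exL d f a b -> exL d g a b ->
  exL d (fun a b => f a b + g a b)%C a b.
Proof. intros; eapply is_exL, is_pd_plus; eauto. Qed.

Lemma is_pd_mult d f g a b : exL d f a b -> exL d g a b ->
  is_dC (fun x => (fun a b => f a b * g a b)%C (fst (upd d a b x)) (snd (upd d a b x)))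
    (coord d a b) (pd d f a b * g a b + f a b * pd d g a b)%C.
Proof. intros H1 H2.
  pose proof (is_dC_mult _ _ _ _ _ (exL_is _ _ _ _ H1) (exL_is _ _ _ _ H2)) as H.
  cbv beta in H. rewrite upd_fst, upd_snd in H. exact H.
Qed.

Lemma pd_mult d f g a b : exL d f a b -> exL d g a b ->
  pd d (fun a b => f a b * g a b)%C a b = (pd d f a b * g a b + f a b * pd d g a b)%C.
Proof. intros; apply is_pd, is_pd_mult; auto. Qed.

Lemma exL_mult d f g a b : exL d f a b -> exL d g a b ->
  exL d (fun a b => f a b * g a b)%C a b.
Proof. intros; eapply is_exL, is_pd_mult; eauto. Qed.

Lemma exL_cst d c a b : exL d (fun _ _ => c) a b.
Proof. eapply is_exL, is_dC_const. Qed.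

Lemma pd_cst d c a b : pd d (fun _ _ => c) a b = RtoC 0.
Proof. apply is_pd, is_dC_const. Qed.

Lemma pd_scal d (c : C) f a b : exL d f a b ->
  pd d (fun a b => c * f a b)%C a b = (c * pd d f a b)%C.
Proof. intros H. rewrite (pd_mult d (fun _ _ => c) f); auto using exL_cst.
  rewrite pd_cst. ring. Qed.

Lemma exL_scal d (c : C) f a b : exL d f a b -> exL d (fun a b => c * f a b)%C a b.
Proof. intros; apply (exL_mult d (fun _ _ => c) f); auto using exL_cst. Qed.

Fixpoint sumC (n : nat) (F : nat -> C) : C :=
  match n with O => RtoC 0 | S n' => (sumC n' F + F n')%C end.

Lemma exL_sum d n F a b : (forall r, (r < n)%nat -> exL d (F r) a b) ->
  exL d (fun a b => sumC n (fun r => F r a b)) a b.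
Proof.
  induction n; intros H; simpl.
  - apply exL_cst.
  - apply (exL_plus d (fun a b => sumC n (fun r => F r a b)) (F n)); auto.
Qed.

Lemma pd_sum d n F a b : (forall r, (r < n)%nat -> exL d (F r) a b) ->
  pd d (fun a b => sumC n (fun r => F r a b)) a b = sumC n (fun r => pd d (F r) a b).
Proof.
  induction n; intros H; simpl.
  - apply pd_cst.
  - rewrite (pd_plus d (fun a b => sumC n (fun r => F r a b)) (F n)); auto.
    + rewrite IHn; auto.
    + apply exL_sum; auto.
Qed.

Definition Sm (f : C -> C -> C) : Prop :=
  forall ds a b, inH2 a b -> cont4 (iterD ds f) a b /\ forall d, exL d (iterD ds f) a b.

Lemma smooth_Sm f : smooth_H2 f -> Sm f.
Proof. intros H ds a b Hab. destruct (H ds a b Hab) as [H1 H2]. split.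
  - apply cont_to_cont4; auto.
  - exact H2. Qed.

Lemma iterD_app ds d f : iterD (ds ++ d :: nil) f = iterD ds (pd d f).
Proof. unfold iterD. rewrite fold_right_app. reflexivity. Qed.

Lemma Sm_pd d f : Sm f -> Sm (pd d f).
Proof. intros H ds. rewrite <- iterD_app. apply H. Qed.

Lemma Sm_exL f d a b : Sm f -> inH2 a b -> exL d f a b.
Proof. intros H Hab. exact (proj2 (H nil a b Hab) d). Qed.

Lemma Sm_cont f a b : Sm f -> inH2 a b -> cont4 f a b.
Proof. intros H Hab. exact (proj1 (H nil a b Hab)). Qed.

Lemma cont4_ext F G a b : eqH F G -> inH2 a b -> cont4 F a b -> cont4 G a b.
Proof.
  intros E [Ha Hb] H eps. destruct (H eps) as [delta Hd]. unfold inH in *.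
  assert (Hm : 0 < Rmin delta (Rmin (Im a) (Im b))).
  { destruct delta; simpl. repeat apply Rmin_pos; auto. }
  exists (mkposreal _ Hm). simpl. intros a' b' h1 h2 h3 h4.
  pose proof (Rmin_l delta (Rmin (Im a) (Im b))).
  pose proof (Rmin_r delta (Rmin (Im a) (Im b))).
  pose proof (Rmin_l (Im a) (Im b)). pose proof (Rmin_r (Im a) (Im b)).
  rewrite <- !E.
  - apply Hd; lra.
  - split; auto.
  - split; unfold inH.
    + apply Rabs_def2 in h2. lra.
    + apply Rabs_def2 in h4. lra.
Qed.

Lemma cont4_lin F G (c : C) a b : cont4 F a b -> cont4 G a b ->
  cont4 (fun a b => c * F a b + G a b)%C a b.
Proof.
  intros HF HG eps.
  assert (H1 : 0 < eps / (2 * (1 + Cmod c))).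
  { pose proof (Cmod_ge_0 c). destruct eps; simpl. apply Rdiv_lt_0_compat; lra. }
  assert (H2 : 0 < eps / 2) by (destruct eps; simpl; lra).
  destruct (HF (mkposreal _ H1)) as [d1 Hd1]. destruct (HG (mkposreal _ H2)) as [d2 Hd2].
  assert (Hm : 0 < Rmin d1 d2) by (destruct d1, d2; simpl; apply Rmin_pos; auto).
  exists (mkposreal _ Hm). simpl. intros a' b' h1 h2 h3 h4.
  pose proof (Rmin_l d1 d2). pose proof (Rmin_r d1 d2).
  assert (A := Hd1 a' b' ltac:(lra) ltac:(lra) ltac:(lra) ltac:(lra)).
  assert (B := Hd2 a' b' ltac:(lra) ltac:(lra) ltac:(lra) ltac:(lra)).
  simpl in A, B.
  replace (c * F a' b' + G a' b' - (c * F a b + G a b))%C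
    with (c * (F a' b' - F a b) + (G a' b' - G a b))%C by ring.
  eapply Rle_lt_trans. apply Cmod_triangle. rewrite Cmod_mult.
  pose proof (Cmod_ge_0 c). pose proof (Cmod_ge_0 (F a' b' - F a b)%C).
  assert (Cmod c * Cmod (F a' b' - F a b) <= Cmod c * (eps / (2 * (1 + Cmod c)))).
  { apply Rmult_le_compat_l; lra. }
  assert (Cmod c * (eps / (2 * (1 + Cmod c))) <= eps / 2).
  { unfold Rdiv. rewrite Rinv_mult. destruct eps as [e he]; simpl.
    assert (0 < / (1 + Cmod c)) by (apply Rinv_0_lt_compat; lra).
    assert (Cmod c * / (1 + Cmod c) <= 1).
    { apply (Rmult_le_reg_r (1 + Cmod c)); [lra|].
      rewrite Rmult_assoc, Rinv_l by lra. lra. }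
    replace (Cmod c * (e * (/ 2 * / (1 + Cmod c)))) with ((Cmod c * / (1 + Cmod c)) * (e / 2)) by (unfold Rdiv; ring).
    pose proof (Rmult_le_compat_r (e/2) _ _ ltac:(lra) H7). simpl in *. lra. }
  lra.
Qed.

Lemma cont4_cst c a b : cont4 (fun _ _ => c) a b.
Proof. intros eps. exists (mkposreal 1 Rlt_0_1). intros. 
  replace (c - c)%C with (RtoC 0) by ring. rewrite Cmod_0. destruct eps; simpl; lra. Qed.

Lemma eqH_iterD ds f g : eqH f g -> eqH (iterD ds f) (iterD ds g).
Proof. induction ds; simpl; intros H; auto. apply pd_ext; auto. Qed.

Lemma Sm_ext f g : Sm f -> eqH f g -> Sm g.
Proof.
  intros H E ds a b Hab. pose proof (eqH_iterD ds _ _ E) as E'. split.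
  - eapply cont4_ext; eauto. apply H; auto.
  - intros d. eapply exL_ext; eauto. apply H; auto.
Qed.

Lemma iterD_lin (c : C) F G : Sm F -> Sm G -> forall ds,
  eqH (iterD ds (fun a b => c * F a b + G a b)%C) (fun a b => c * iterD ds F a b + iterD ds G a b)%C.
Proof.
  intros HF HG ds. induction ds as [|d ds IH]; simpl.
  - apply eqH_refl.
  - eapply eqH_trans. apply pd_ext, IH.
    intros a b Hab.
    assert (E1 := proj2 (HF ds a b Hab) d). assert (E2 := proj2 (HG ds a b Hab) d).
    rewrite pd_plus; auto using exL_scal. rewrite pd_scal; auto.
Qed.

Lemma Sm_lin (c : C) F G : Sm F -> Sm G -> Sm (fun a b => c * F a b + G a b)%C.
Proof.
  intros HF HG ds a b Hab. pose proof (eqH_sym _ _ (iterD_lin c F G HF HG ds)) as E. split.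
  - eapply cont4_ext; eauto. apply cont4_lin; apply HF || apply HG; auto.
  - intros d. eapply exL_ext; eauto. apply exL_plus. apply exL_scal. apply HF; auto. apply HG; auto.
Qed.

Lemma iterD_cst ds c : iterD ds (fun _ _ => c) =
  match ds with nil => (fun _ _ => c) | _ => (fun _ _ => RtoC 0) end.
Proof.
  induction ds as [|d ds IH]; simpl; auto.
  apply functional_extensionality; intro a; apply functional_extensionality; intro b.
  rewrite IH. destruct ds; apply pd_cst.
Qed.

Lemma Sm_cst c : Sm (fun _ _ => c).
Proof. intros ds a b Hab. rewrite iterD_cst. destruct ds; split; auto using cont4_cst, exL_cst. Qed.

Lemma Sm_eq f g : Sm f -> (forall a b, f a b = g a b) -> Sm g.
Proof. intros H E. replace g with f; auto.
  apply functional_extensionality; intro a; apply functional_extensionality; intro b; auto. Qed.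

Lemma Sm_plus F G : Sm F -> Sm G -> Sm (fun a b => F a b + G a b)%C.
Proof. intros. eapply Sm_eq. apply (Sm_lin 1 F G); auto. intros; simpl; ring. Qed.

Lemma Sm_scal (c : C) F : Sm F -> Sm (fun a b => c * F a b)%C.
Proof. intros. eapply Sm_eq. apply (Sm_lin c F (fun _ _ => RtoC 0)); auto using Sm_cst.
  intros; simpl; ring. Qed.

Lemma Sm_sum n F : (forall r, (r < n)%nat -> Sm (F r)) -> Sm (fun a b => sumC n (fun r => F r a b)).
Proof. induction n; intros H; simpl. apply Sm_cst. apply Sm_plus; auto. Qed.

Definition updp d (p : C * C) x := upd d (fst p) (snd p) x.
Definition coordp d (p : C * C) := coord d (fst p) (snd p).

Lemma K1 d1 d2 p u : d1 <> d2 -> coordp d2 (updp d1 p u) = coordp d2 p.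
Proof. intros H. destruct p as [[? ?] [? ?]]; destruct d1, d2; simpl; try reflexivity; congruence. Qed.
Lemma K2 d p x : coordp d (updp d p x) = x.
Proof. destruct p as [[? ?] [? ?]]; destruct d; reflexivity. Qed.
Lemma K3 d p x y : updp d (updp d p x) y = updp d p y.
Proof. destruct p as [[? ?] [? ?]]; destruct d; reflexivity. Qed.
Lemma K4 d1 d2 p x y : d1 <> d2 -> updp d1 (updp d2 p y) x = updp d2 (updp d1 p x) y.
Proof. intros H. destruct p as [[? ?] [? ?]]; destruct d1, d2; simpl; try reflexivity; congruence. Qed.
Lemma K5 d p : updp d p (coordp d p) = p.
Proof. destruct p as [[? ?] [? ?]]; destruct d; reflexivity. Qed.

Lemma im_le_Cmod z : Rabs (Im z) <= Cmod z.
Proof. pose proof (Rmax_Cmod z). pose proof (Rmax_r (Rabs (fst z)) (Rabs (snd z))). unfold Im; lra. Qed.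

Lemma DL1_diff f x y : DL_regular_n f 1 x y ->
  differentiable_pt_lim f x y (Derive (fun z => f z y) x) (Derive (fun z => f x z) y).
Proof.
  intros [D [delta HD]] eps.
  assert (He : 0 < Rmin delta (eps / (Rabs D + 1))).
  { apply Rmin_pos. apply delta. apply Rdiv_lt_0_compat. apply eps. pose proof (Rabs_pos D); lra. }
  exists (mkposreal _ He). simpl. intros u v hu hv.
  pose proof (Rmin_l delta (eps / (Rabs D + 1))). pose proof (Rmin_r delta (eps / (Rabs D + 1))).
  specialize (HD u v ltac:(lra) ltac:(lra)).
  assert (E : DL_pol 1 f x y (u - x) (v - y) = f x y + (Derive (fun z => f z y) x * (u - x) + Derive (fun z => f x z) y * (v - y))).
  { unfold DL_pol, differential, partial_derive, Binomial.C. simpl. field. }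
  rewrite E in HD.
  set (M := Rmax (Rabs (u - x)) (Rabs (v - y))) in *.
  assert (HM0 : 0 <= M) by (unfold M; pose proof (Rabs_pos (u-x)); pose proof (Rmax_l (Rabs (u - x)) (Rabs (v - y))); lra).
  assert (HM : M < eps / (Rabs D + 1)).
  { unfold M. apply Rmax_lub_lt; lra. }
  replace (f u v - f x y - (Derive (fun z => f z y) x * (u - x) + Derive (fun z => f x z) y * (v - y)))
    with (f u v - (f x y + (Derive (fun z => f z y) x * (u - x) + Derive (fun z => f x z) y * (v - y)))) by ring.
  eapply Rle_trans. apply HD.
  assert (D * M ^ 2 <= Rabs D * M * M).
  { pose proof (Rle_abs D). simpl. rewrite Rmult_1_r. rewrite <- Rmult_assoc. apply Rmult_le_compat_r; auto. apply Rmult_le_compat_r; auto. }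
  assert (Rabs D * M <= eps).
  { pose proof (Rabs_pos D). destruct eps as [e he]; simpl in *.
    assert (Rabs D * M <= Rabs D * (e / (Rabs D + 1))) by (apply Rmult_le_compat_l; lra).
    assert (Rabs D * (e / (Rabs D + 1)) <= e).
    { unfold Rdiv. apply (Rmult_le_reg_r (Rabs D + 1)). lra.
      replace (Rabs D * (e * / (Rabs D + 1)) * (Rabs D + 1)) with (Rabs D * e) by (field; lra). nra. }
    lra. }
  assert (Rabs D * M * M <= eps * M) by (apply Rmult_le_compat_r; auto).
  lra.
Qed.

Section PR.
Variable pr : C -> R.
Hypothesis pr_dC : forall h x, pr (dC h x) = Derive (fun t => pr (h t)) x.
Hypothesis pr_ex : forall h x, ex_dC h x -> ex_derive (fun t => pr (h t)) x.
Hypothesis pr_le : forall z, Rabs (pr z) <= Cmod z.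
Hypothesis pr_minus : forall z w, pr (z - w)%C = pr z - pr w.

Variables (d1 d2 : dir) (Hd : d1 <> d2) (p : C * C).

Definition PP u v := updp d2 (updp d1 p u) v.
Definition gS (G : C -> C -> C) u v := pr (G (fst (PP u v)) (snd (PP u v))).

Lemma line_P1 G u v : line d1 G (fst (PP u v)) (snd (PP u v)) = fun z => G (fst (PP z v)) (snd (PP z v)).
Proof. rewrite line_eq. apply functional_extensionality; intro z.
  change (upd d1 (fst (PP u v)) (snd (PP u v)) z) with (updp d1 (PP u v) z).
  unfold PP. rewrite K4 by auto. rewrite K3. reflexivity. Qed.
Lemma coord_P1 u v : coord d1 (fst (PP u v)) (snd (PP u v)) = u.
Proof. change (coordp d1 (PP u v) = u). unfold PP. rewrite K1 by auto. apply K2. Qed.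
Lemma line_P2 G u v : line d2 G (fst (PP u v)) (snd (PP u v)) = fun z => G (fst (PP u z)) (snd (PP u z)).
Proof. rewrite line_eq. apply functional_extensionality; intro z.
  change (upd d2 (fst (PP u v)) (snd (PP u v)) z) with (updp d2 (PP u v) z).
  unfold PP. rewrite K3. reflexivity. Qed.
Lemma coord_P2 u v : coord d2 (fst (PP u v)) (snd (PP u v)) = v.
Proof. change (coordp d2 (PP u v) = v). unfold PP. apply K2. Qed.

Lemma gS_dx G u v : Derive (fun z => gS G z v) u = gS (pd d1 G) u v.
Proof. unfold gS at 2, pd. rewrite line_P1, coord_P1, pr_dC. reflexivity. Qed.
Lemma gS_dy G u v : Derive (fun z => gS G u z) v = gS (pd d2 G) u v.
Proof. unfold gS at 2, pd. rewrite line_P2, coord_P2, pr_dC. reflexivity. Qed.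

Lemma gS_exx G u v : exL d1 G (fst (PP u v)) (snd (PP u v)) -> ex_derive (fun z => gS G z v) u.
Proof. unfold exL. rewrite line_P1, coord_P1. apply pr_ex. Qed.
Lemma gS_exy G u v : exL d2 G (fst (PP u v)) (snd (PP u v)) -> ex_derive (fun z => gS G u z) v.
Proof. unfold exL. rewrite line_P2, coord_P2. apply pr_ex. Qed.

Lemma gS_cont G u v : cont4 G (fst (PP u v)) (snd (PP u v)) -> continuity_2d_pt (gS G) u v.
Proof.
  intros H eps. destruct (H eps) as [delta Hd']. exists delta. intros u' v' hu hv.
  unfold gS. rewrite <- pr_minus. eapply Rle_lt_trans. apply pr_le.
  apply Hd'; unfold PP, updp; destruct p as [[? ?] [? ?]]; destruct d1, d2; simpl;
   try (rewrite Rminus_diag, Rabs_R0; apply delta); assumption.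
Qed.

Lemma PP_near : inH2 (fst p) (snd p) -> exists m : posreal, forall u v,
  Rabs (u - coordp d1 p) < m -> Rabs (v - coordp d2 p) < m -> inH2 (fst (PP u v)) (snd (PP u v)).
Proof.
  intros [Ha Hb]. unfold inH in *.
  exists (mkposreal _ (Rmin_pos _ _ Ha Hb)). simpl.
  pose proof (Rmin_l (Im (fst p)) (Im (snd p))). pose proof (Rmin_r (Im (fst p)) (Im (snd p))).
  intros u v hu hv. apply Rabs_def2 in hu. apply Rabs_def2 in hv.
  unfold PP, updp, coordp in *.
  destruct d1, d2; simpl in *; split; unfold inH; simpl; lra.
Qed.

Lemma PP_c : PP (coordp d1 p) (coordp d2 p) = p.
Proof. unfold PP. rewrite K5. apply K5. Qed.

Lemma gS_exdiff n : forall G u v, Sm G -> inH2 (fst (PP u v)) (snd (PP u v)) -> ex_diff_n (gS G) n u v.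
Proof.
  induction n; intros G u v HG Huv; simpl; split; auto.
  - apply gS_cont. apply Sm_cont; auto.
  - apply gS_cont. apply Sm_cont; auto.
  - split; [apply gS_exx, Sm_exL; auto|].
    split; [apply gS_exy, Sm_exL; auto|].
    split.
    + replace (fun u0 v0 : R => Derive (fun z : R => gS G z v0) u0) with (gS (pd d1 G)).
      * apply IHn; auto. apply Sm_pd; auto.
      * apply functional_extensionality; intro; apply functional_extensionality; intro. symmetry; apply gS_dx.
    + replace (fun u0 v0 : R => Derive (fun z : R => gS G u0 z) v0) with (gS (pd d2 G)).
      * apply IHn; auto. apply Sm_pd; auto.
      * apply functional_extensionality; intro; apply functional_extensionality; intro. symmetry; apply gS_dy.
Qed.

Lemma gS_schwarz G : Sm G -> inH2 (fst p) (snd p) ->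
  gS (pd d1 (pd d2 G)) (coordp d1 p) (coordp d2 p) = gS (pd d2 (pd d1 G)) (coordp d1 p) (coordp d2 p).
Proof.
  intros HG Hp. rewrite <- gS_dx, <- gS_dy.
  rewrite (Derive_ext (fun z => gS (pd d2 G) z (coordp d2 p)) (fun z => Derive (fun t => gS G z t) (coordp d2 p)))
    by (intros; symmetry; apply gS_dy).
  rewrite (Derive_ext (fun z => gS (pd d1 G) (coordp d1 p) z) (fun z => Derive (fun t => gS G t z) (coordp d1 p)))
    by (intros; symmetry; apply gS_dx).
  destruct (PP_near Hp) as [m Hm].
  apply Schwarz.
  - exists m. intros u v hu hv. specialize (Hm u v hu hv).
    split; [apply gS_exx, Sm_exL; auto|].
    split; [apply gS_exy, Sm_exL; auto|].
    split.
    + eapply ex_derive_ext. intros; symmetry; apply gS_dy. apply gS_exx, Sm_exL; auto. apply Sm_pd; auto.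
    + eapply ex_derive_ext. intros; symmetry; apply gS_dx. apply gS_exy, Sm_exL; auto. apply Sm_pd; auto.
  - apply (continuity_2d_pt_ext (gS (pd d1 (pd d2 G)))).
    + intros u v. rewrite <- gS_dx. apply Derive_ext. intros; symmetry; apply gS_dy.
    + apply gS_cont. rewrite PP_c. apply Sm_cont; auto. apply Sm_pd, Sm_pd; auto.
  - apply (continuity_2d_pt_ext (gS (pd d2 (pd d1 G)))).
    + intros u v. rewrite <- gS_dy. apply Derive_ext. intros; symmetry; apply gS_dx.
    + apply gS_cont. rewrite PP_c. apply Sm_cont; auto. apply Sm_pd, Sm_pd; auto.
Qed.

Lemma gS_diag G : Sm G -> inH2 (fst p) (snd p) -> coordp d1 p = coordp d2 p ->
  is_derive (fun x => gS G x x) (coordp d1 p)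
    (gS (pd d1 G) (coordp d1 p) (coordp d2 p) + gS (pd d2 G) (coordp d1 p) (coordp d2 p)).
Proof.
  intros HG Hp Hc. apply is_derive_Reals.
  destruct (PP_near Hp) as [m Hm].
  assert (HD : differentiable_pt_lim (gS G) (coordp d1 p) (coordp d2 p)
     (Derive (fun z => gS G z (coordp d2 p)) (coordp d1 p)) (Derive (fun z => gS G (coordp d1 p) z) (coordp d2 p))).
  { apply DL1_diff. apply Taylor_Lagrange_2d. exists m. intros u v hu hv.
    apply gS_exdiff; auto. }
  rewrite gS_dx, gS_dy in HD. rewrite <- Hc in HD |- *.
  pose proof (derivable_pt_lim_comp_2d _ (fun x => x) (fun x => x) _ _ _ _ _ HD (derivable_pt_lim_id _) (derivable_pt_lim_id _)) as R.
  rewrite !Rmult_1_r in R. exact R.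
Qed.
End PR.

Lemma Re_dC h x : Re (dC h x) = Derive (fun t => Re (h t)) x. Proof. reflexivity. Qed.
Lemma Im_dC h x : Im (dC h x) = Derive (fun t => Im (h t)) x. Proof. reflexivity. Qed.
Lemma Re_ex h x : ex_dC h x -> ex_derive (fun t => Re (h t)) x. Proof. intros [H _]; exact H. Qed.
Lemma Im_ex h x : ex_dC h x -> ex_derive (fun t => Im (h t)) x. Proof. intros [_ H]; exact H. Qed.
Lemma Re_minus z w : Re (z - w)%C = Re z - Re w. Proof. destruct z, w; simpl; ring. Qed.
Lemma Im_minus z w : Im (z - w)%C = Im z - Im w. Proof. destruct z, w; simpl; ring. Qed.

Lemma C_ext (z w : C) : Re z = Re w -> Im z = Im w -> z = w.
Proof. destruct z, w; simpl; intros; subst; reflexivity. Qed.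

Lemma dir_eq_dec (d1 d2 : dir) : {d1 = d2} + {d1 <> d2}.
Proof. decide equality. Qed.

Lemma schwarz_pd d1 d2 G a b : Sm G -> inH2 a b -> pd d1 (pd d2 G) a b = pd d2 (pd d1 G) a b.
Proof.
  intros HG Hab. destruct (dir_eq_dec d1 d2) as [<-|Hd]; [reflexivity|].
  pose proof (gS_schwarz Re Re_dC Re_ex re_le_Cmod Re_minus d1 d2 Hd (a, b) G HG Hab) as H1.
  pose proof (gS_schwarz Im Im_dC Im_ex im_le_Cmod Im_minus d1 d2 Hd (a, b) G HG Hab) as H2.
  unfold gS in H1, H2. rewrite PP_c in H1, H2. simpl in H1, H2.
  apply C_ext; assumption.
Qed.

Lemma diag_du G t : Sm G -> inH t -> du (fun t => G t t) t = (pd U1 G t t + pd U2 G t t)%C.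
Proof.
  intros HG Ht. assert (Hp : inH2 t t) by (split; auto).
  assert (Hn : U1 <> U2) by discriminate.
  pose proof (gS_diag Re Re_dC Re_ex re_le_Cmod Re_minus U1 U2 Hn (t, t) G HG Hp eq_refl) as H1.
  pose proof (gS_diag Im Im_dC Im_ex im_le_Cmod Im_minus U1 U2 Hn (t, t) G HG Hp eq_refl) as H2.
  unfold gS at 2 3 in H1. unfold gS at 2 3 in H2. rewrite PP_c in H1, H2. simpl in H1, H2.
  apply is_dC_unique. split.
  - simpl. exact H1.
  - simpl. exact H2.
Qed.

Lemma diag_dv G t : Sm G -> inH t -> dv (fun t => G t t) t = (pd V1 G t t + pd V2 G t t)%C.
Proof.
  intros HG Ht. assert (Hp : inH2 t t) by (split; auto).
  assert (Hn : V1 <> V2) by discriminate.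
  pose proof (gS_diag Re Re_dC Re_ex re_le_Cmod Re_minus V1 V2 Hn (t, t) G HG Hp eq_refl) as H1.
  pose proof (gS_diag Im Im_dC Im_ex im_le_Cmod Im_minus V1 V2 Hn (t, t) G HG Hp eq_refl) as H2.
  unfold gS at 2 3 in H1. unfold gS at 2 3 in H2. rewrite PP_c in H1, H2. simpl in H1, H2.
  apply is_dC_unique. split.
  - simpl. exact H1.
  - simpl. exact H2.
Qed.

Definition Wop (c1 : C) (d1 : dir) (c2 : C) (d2 : dir) (f : C -> C -> C) : C -> C -> C :=
  fun a b => (c1 * pd d1 f a b + c2 * pd d2 f a b)%C.

Lemma dtau1_W : dtau1 = Wop (RtoC (/2)) U1 (- (RtoC (/2) * Ci))%C V1.
Proof. apply functional_extensionality; intro f; apply functional_extensionality; intro a;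
  apply functional_extensionality; intro b; unfold dtau1, Wop; ring. Qed.
Lemma dtaubar1_W : dtaubar1 = Wop (RtoC (/2)) U1 (RtoC (/2) * Ci)%C V1.
Proof. apply functional_extensionality; intro f; apply functional_extensionality; intro a;
  apply functional_extensionality; intro b; unfold dtaubar1, Wop; ring. Qed.
Lemma dtau2_W : dtau2 = Wop (RtoC (/2)) U2 (- (RtoC (/2) * Ci))%C V2.
Proof. apply functional_extensionality; intro f; apply functional_extensionality; intro a;
  apply functional_extensionality; intro b; unfold dtau2, Wop; ring. Qed.
Lemma dtaubar2_W : dtaubar2 = Wop (RtoC (/2)) U2 (RtoC (/2) * Ci)%C V2.
Proof. apply functional_extensionality; intro f; apply functional_extensionality; intro a;
  apply functional_extensionality; intro b; unfold dtaubar2, Wop; ring. Qed.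

Lemma Sm_W c1 d1 c2 d2 f : Sm f -> Sm (Wop c1 d1 c2 d2 f).
Proof. intros H. unfold Wop. apply Sm_lin. apply Sm_pd; auto. apply Sm_scal, Sm_pd; auto. Qed.

Lemma W_ext c1 d1 c2 d2 f g : eqH f g -> eqH (Wop c1 d1 c2 d2 f) (Wop c1 d1 c2 d2 g).
Proof. intros H a b Hab. unfold Wop. rewrite (pd_ext d1 f g H), (pd_ext d2 f g H); auto. Qed.

Lemma pd_W d c1 d1 c2 d2 f a b : Sm f -> inH2 a b ->
  pd d (Wop c1 d1 c2 d2 f) a b = (c1 * pd d (pd d1 f) a b + c2 * pd d (pd d2 f) a b)%C.
Proof. intros H Hab. unfold Wop.
  assert (E1 : exL d (pd d1 f) a b) by (apply Sm_exL; auto; apply Sm_pd; auto).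
  assert (E2 : exL d (pd d2 f) a b) by (apply Sm_exL; auto; apply Sm_pd; auto).
  rewrite pd_plus by (apply exL_scal; auto). rewrite !pd_scal by auto. reflexivity. Qed.

Lemma W_comm c1 d1 c2 d2 e1 d3 e2 d4 f : Sm f ->
  eqH (Wop c1 d1 c2 d2 (Wop e1 d3 e2 d4 f)) (Wop e1 d3 e2 d4 (Wop c1 d1 c2 d2 f)).
Proof. intros H a b Hab. unfold Wop at 1 3. rewrite !pd_W by auto.
  rewrite (schwarz_pd d1 d3), (schwarz_pd d1 d4), (schwarz_pd d2 d3), (schwarz_pd d2 d4) by auto.
  ring. Qed.

Definition good (X : (C -> C -> C) -> (C -> C -> C)) : Prop :=
  (forall f g, eqH f g -> eqH (X f) (X g)) /\ (forall f, Sm f -> Sm (X f)).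

Lemma good_W c1 d1 c2 d2 : good (Wop c1 d1 c2 d2).
Proof. split. apply W_ext. apply Sm_W. Qed.

Lemma good_iter X n : good X -> good (Nat.iter n X).
Proof. intros [H1 H2]. induction n as [|n [IH1 IH2]]; split; simpl; auto. Qed.

Lemma comm_iter X Y : good X -> good Y -> (forall f, Sm f -> eqH (X (Y f)) (Y (X f))) ->
  forall n f, Sm f -> eqH (X (Nat.iter n Y f)) (Nat.iter n Y (X f)).
Proof.
  intros [X1 X2] [Y1 Y2] HC n. induction n as [|n IH]; intros f Hf; simpl.
  - apply eqH_refl.
  - eapply eqH_trans. apply HC. apply (good_iter Y n (conj Y1 Y2)); auto.
    apply Y1, IH; auto.
Qed.

Lemma comm_iter2 X Y : good X -> good Y -> (forall f, Sm f -> eqH (X (Y f)) (Y (X f))) ->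
  forall m n f, Sm f -> eqH (Nat.iter m X (Nat.iter n Y f)) (Nat.iter n Y (Nat.iter m X f)).
Proof.
  intros GX GY HC m. induction m as [|m IH]; intros n f Hf; simpl.
  - apply eqH_refl.
  - eapply eqH_trans. apply (proj1 GX), IH; auto.
    apply comm_iter; auto. apply (good_iter X m GX); auto.
Qed.

Lemma dtau1n_iter m f : dtau1n m f = Nat.iter m dtau1 f.
Proof. induction m; simpl; congruence. Qed.
Lemma dtau2n_iter m f : dtau2n m f = Nat.iter m dtau2 f.
Proof. induction m; simpl; congruence. Qed.

Lemma good_dtau1 : good dtau1. Proof. rewrite dtau1_W; apply good_W. Qed.
Lemma good_dtau2 : good dtau2. Proof. rewrite dtau2_W; apply good_W. Qed.
Lemma good_dtaubar1 : good dtaubar1. Proof. rewrite dtaubar1_W; apply good_W. Qed.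
Lemma good_dtaubar2 : good dtaubar2. Proof. rewrite dtaubar2_W; apply good_W. Qed.

Ltac wcomm := intros; rewrite ?dtau1_W, ?dtau2_W, ?dtaubar1_W, ?dtaubar2_W; apply W_comm; auto.

Lemma Sm_dtau1n m f : Sm f -> Sm (dtau1n m f).
Proof. rewrite dtau1n_iter. apply (good_iter _ m good_dtau1). Qed.
Lemma Sm_dtau2n m f : Sm f -> Sm (dtau2n m f).
Proof. rewrite dtau2n_iter. apply (good_iter _ m good_dtau2). Qed.

Lemma comm_bar1_12 m s g : Sm g ->
  eqH (dtaubar1 (dtau1n m (dtau2n s g))) (dtau2n s (dtau1n m (dtaubar1 g))).
Proof.
  intros Hg. rewrite !dtau1n_iter, !dtau2n_iter.
  eapply eqH_trans. apply comm_iter; auto using good_dtaubar1, good_dtau1. wcomm.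
  apply (good_iter _ s good_dtau2); auto.
  eapply eqH_trans. apply (proj1 (good_iter _ m good_dtau1)).
  apply comm_iter; auto using good_dtaubar1, good_dtau2. wcomm.
  apply eqH_sym. apply comm_iter2; auto using good_dtau2, good_dtau1. wcomm.
  apply good_dtaubar1; auto.
Qed.

Lemma comm_bar2_12 m s g : Sm g ->
  eqH (dtaubar2 (dtau1n m (dtau2n s g))) (dtau1n m (dtau2n s (dtaubar2 g))).
Proof.
  intros Hg. rewrite !dtau1n_iter, !dtau2n_iter.
  eapply eqH_trans. apply comm_iter; auto using good_dtaubar2, good_dtau1. wcomm.
  apply (good_iter _ s good_dtau2); auto.
  apply (proj1 (good_iter _ m good_dtau1)).
  apply comm_iter; auto using good_dtaubar2, good_dtau2. wcomm.
Qed.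


Definition swap (f : C -> C -> C) : C -> C -> C := fun a b => f b a.
Definition swd (d : dir) : dir := match d with U1 => U2 | V1 => V2 | U2 => U1 | V2 => V1 end.

Lemma pd_swap d f : pd d (swap f) = swap (pd (swd d) f).
Proof. destruct d; reflexivity. Qed.

Lemma iterD_swap ds f : iterD ds (swap f) = swap (iterD (map swd ds) f).
Proof. induction ds as [|d ds IH]; simpl. reflexivity. rewrite IH. apply pd_swap. Qed.

Lemma exL_swap d F a b : exL (swd d) F b a -> exL d (swap F) a b.
Proof. destruct d; exact (fun H => H). Qed.

Lemma cont4_swap F a b : cont4 F b a -> cont4 (swap F) a b.
Proof. intros H eps. destruct (H eps) as [delta Hd]. exists delta. intros. unfold swap. apply Hd; auto. Qed.

Lemma inH2_swap a b : inH2 a b -> inH2 b a.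
Proof. intros [H1 H2]; split; auto. Qed.

Lemma Sm_swap f : Sm f -> Sm (swap f).
Proof.
  intros H ds a b Hab. rewrite iterD_swap. destruct (H (map swd ds) b a (inH2_swap _ _ Hab)) as [H1 H2].
  split. apply cont4_swap; auto. intros d. apply exL_swap. apply H2.
Qed.

Lemma eqH_swap f g : eqH f g -> eqH (swap f) (swap g).
Proof. intros H a b Hab. unfold swap. apply H, inH2_swap; auto. Qed.

Lemma dtau1_swap f : dtau1 (swap f) = swap (dtau2 f). Proof. reflexivity. Qed.
Lemma dtaubar1_swap f : dtaubar1 (swap f) = swap (dtaubar2 f). Proof. reflexivity. Qed.
Lemma dtau2_swap f : dtau2 (swap f) = swap (dtau1 f). Proof. reflexivity. Qed.
Lemma dtaubar2_swap f : dtaubar2 (swap f) = swap (dtaubar1 f). Proof. reflexivity. Qed.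
Lemma dtau1n_swap n f : dtau1n n (swap f) = swap (dtau2n n f).
Proof. induction n; simpl. reflexivity. rewrite IHn. reflexivity. Qed.
Lemma dtau2n_swap n f : dtau2n n (swap f) = swap (dtau1n n f).
Proof. induction n; simpl. reflexivity. rewrite IHn. reflexivity. Qed.
Lemma R1_swap k f : Defs.R1 k (swap f) = swap (Defs.R2 k f). Proof. reflexivity. Qed.
Lemma Rit1_swap k j f : Rit1 k j (swap f) = swap (Rit2 k j f).
Proof. induction j; simpl. reflexivity. rewrite IHj. reflexivity. Qed.
Lemma Delta1_swap k f : Delta1 k (swap f) = swap (Delta2 k f). Proof. reflexivity. Qed.
Lemma L1_swap f : L1 (swap f) = swap (L2 f). Proof. reflexivity. Qed.
Lemma swap_swap f : swap (swap f) = f. Proof. reflexivity. Qed.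

Lemma line_cb d (c : C -> C) a b : (d = U1 \/ d = V1) -> line d (fun _ b => c b) a b = fun _ => c b.
Proof. intros [-> | ->]; reflexivity. Qed.

Lemma exL_cb d (c : C -> C) a b : (d = U1 \/ d = V1) -> exL d (fun _ b => c b) a b.
Proof. intros H. unfold exL. rewrite line_cb by auto. eapply is_dC_ex, is_dC_const. Qed.

Lemma pd_cb0 d (c : C -> C) a b : (d = U1 \/ d = V1) -> pd d (fun _ b => c b) a b = RtoC 0.
Proof. intros H. unfold pd. rewrite line_cb by auto. apply is_dC_unique, is_dC_const. Qed.

Lemma pd_cb d (c : C -> C) h a b : (d = U1 \/ d = V1) -> exL d h a b ->
  pd d (fun a b => c b * h a b)%C a b = (c b * pd d h a b)%C.
Proof. intros Hd H. rewrite (pd_mult d (fun _ b => c b) h); auto using exL_cb.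
  rewrite pd_cb0 by auto. ring. Qed.

Lemma exL_cbm d (c : C -> C) h a b : (d = U1 \/ d = V1) -> exL d h a b ->
  exL d (fun a b => c b * h a b)%C a b.
Proof. intros Hd H. apply (exL_mult d (fun _ b => c b) h); auto using exL_cb. Qed.

Lemma dtau1_cb (c : C -> C) h a b : exL U1 h a b -> exL V1 h a b ->
  dtau1 (fun a b => c b * h a b)%C a b = (c b * dtau1 h a b)%C.
Proof. intros. unfold dtau1. rewrite !pd_cb by auto. ring. Qed.

Lemma dtaubar1_cb (c : C -> C) h a b : exL U1 h a b -> exL V1 h a b ->
  dtaubar1 (fun a b => c b * h a b)%C a b = (c b * dtaubar1 h a b)%C.
Proof. intros. unfold dtaubar1. rewrite !pd_cb by auto. ring. Qed.

Lemma M1 n (c : C -> C) h : Sm h ->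
  eqH (dtau1n n (fun a b => c b * h a b)%C) (fun a b => c b * dtau1n n h a b)%C.
Proof.
  intros Hh. induction n as [|n IH]; simpl.
  - apply eqH_refl.
  - eapply eqH_trans. apply (proj1 good_dtau1), IH.
    intros a b Hab. apply dtau1_cb; apply Sm_exL; auto; apply Sm_dtau1n; auto.
Qed.

Lemma M1' n (c : C -> C) h : Sm h ->
  eqH (dtau2n n (fun a b => c a * h a b)%C) (fun a b => c a * dtau2n n h a b)%C.
Proof.
  intros Hh. pose proof (eqH_swap _ _ (M1 n c (swap h) (Sm_swap h Hh))) as H.
  replace (fun a b => (c a * h a b)%C) with (swap (fun a b => (c b * swap h a b)%C)) by reflexivity.
  rewrite dtau2n_swap.
  replace (fun a b => (c a * dtau2n n h a b)%C) with (swap (fun a b => (c b * dtau1n n (swap h) a b)%C))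
    by (rewrite dtau1n_swap; reflexivity).
  exact H.
Qed.

Lemma isd_invpow (x:R) (m:nat) : x <> 0 -> is_derive (fun y => (/ y) ^ m) x (- INR m * (/ x) ^ (S m)).
Proof. intros. auto_derive. auto.
  destruct m. simpl. ring. simpl pred. rewrite S_INR. simpl. field. auto. Qed.

Definition wp (m : nat) : C -> C -> C := fun a _ => RtoC ((/ Im a) ^ m).

Lemma exL_wU1 m a b : exL U1 (wp m) a b.
Proof. eapply is_exL. exact (is_dC_const (RtoC ((/ Im a) ^ m)) _). Qed.
Lemma pd_wU1 m a b : pd U1 (wp m) a b = RtoC 0.
Proof. apply is_pd. exact (is_dC_const (RtoC ((/ Im a) ^ m)) _). Qed.
Lemma is_wV1 m a b : inH a ->
  is_dC (fun x => wp m (fst (upd V1 a b x)) (snd (upd V1 a b x))) (coord V1 a b)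
        (RtoC (- INR m * (/ Im a) ^ (S m))).
Proof. intros Ha. apply (is_dC_RtoC (fun y => (/ y) ^ m)). apply isd_invpow. unfold inH in Ha. simpl. lra. Qed.
Lemma exL_wV1 m a b : inH a -> exL V1 (wp m) a b.
Proof. intros; eapply is_exL, is_wV1; auto. Qed.
Lemma pd_wV1 m a b : inH a -> pd V1 (wp m) a b = RtoC (- INR m * (/ Im a) ^ (S m)).
Proof. intros; apply is_pd, is_wV1; auto. Qed.

Lemma dtau1_wm m h a b : inH2 a b -> exL U1 h a b -> exL V1 h a b ->
  dtau1 (fun a b => wp m a b * h a b)%C a b =
  (wp m a b * dtau1 h a b + Ci * RtoC (INR m) * RtoC (/ 2) * RtoC (/ Im a) * wp m a b * h a b)%C.
Proof.
  intros [Ha Hb] H1 H2. unfold dtau1.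
  rewrite !pd_mult by (auto using exL_wU1, exL_wV1).
  rewrite pd_wU1, pd_wV1 by auto.
  replace (RtoC (- INR m * (/ Im a) ^ (S m))) with (RtoC (- INR m) * RtoC (/ Im a) * wp m a b)%C
    by (unfold wp; rewrite <- !RtoC_mult; f_equal; simpl; ring).
  rewrite RtoC_opp. ring.
Qed.

Lemma exL_wm d m h a b : (d = U1 \/ d = V1) -> inH a -> exL d h a b -> exL d (fun a b => wp m a b * h a b)%C a b.
Proof. intros [-> | ->] Ha H; apply exL_mult; auto using exL_wU1, exL_wV1. Qed.


Fixpoint rising (x : R) (m : nat) : R :=
  match m with O => 1 | S m' => rising x m' * (x + INR m') end.

Lemma Ci2 : (Ci * Ci = - RtoC 1)%C. Proof. apply injective_projections; simpl; ring. Qed.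

Lemma RtoC_neq0 x : x <> 0 -> RtoC x <> RtoC 0.
Proof. intros H E. apply H. injection E; auto. Qed.

Lemma lin_solve (L R E K : C) : (L - R = K * E)%C -> E = RtoC 0 -> L = R.
Proof. intros H1 H2. rewrite H2, Cmult_0_r in H1. apply Ceq_minus. exact H1. Qed.

Lemma M2a k g : Sm g -> eqH (Delta1 k g) (fun _ _ => RtoC 0) ->
  eqH (dtau1 (dtaubar1 g)) (fun a b => Ci * RtoC (IZR k) * RtoC (/ 2) * RtoC (/ Im a) * dtaubar1 g a b)%C.
Proof.
  intros Hg HD a b Hab. pose proof (HD a b Hab) as H. unfold Delta1 in H.
  rewrite dtau1_W, dtaubar1_W. unfold Wop at 1. rewrite !pd_W by auto.
  rewrite (schwarz_pd V1 U1) by auto. unfold Wop.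
  assert (Hv : Im a <> 0) by (destruct Hab as [Ha _]; unfold inH in Ha; lra).
  rewrite RtoC_opp, RtoC_pow, RtoC_mult in H.
  rewrite (RtoC_inv (Im a)) by auto. rewrite (RtoC_inv 2) by lra.
  eapply (lin_solve _ _ _ (- / (RtoC 4 * RtoC (Im a) * RtoC (Im a)))).
  2: exact H.
  field [Ci2]. repeat split; try apply RtoC_neq0; auto; lra.
Qed.

Lemma M2b k g m : Sm g -> eqH (Delta1 k g) (fun _ _ => RtoC 0) ->
  eqH (dtau1n m (dtaubar1 g))
      (fun a b => wp m a b * ((Ci * RtoC (/ 2)) ^ m * RtoC (rising (IZR k) m) * dtaubar1 g a b))%C.
Proof.
  intros Hg HD. induction m as [|m IH].
  - intros a b _. unfold wp. simpl. ring.
  - simpl. eapply eqH_trans. apply (proj1 good_dtau1), IH.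
    intros a b Hab.
    assert (SA : Sm (dtaubar1 g)) by (apply good_dtaubar1; auto).
    rewrite dtau1_wm; auto.
    2: apply exL_scal, Sm_exL; auto.
    2: apply exL_scal, Sm_exL; auto.
    rewrite (dtau1_cb (fun _ => ((Ci * RtoC (/ 2)) ^ m * RtoC (rising (IZR k) m))%C)) by (apply Sm_exL; auto).
    rewrite (M2a k g Hg HD a b Hab).
    replace (wp (S m) a b) with (RtoC (/ Im a) * wp m a b)%C by (unfold wp; rewrite <- RtoC_mult; reflexivity).
    rewrite RtoC_mult, RtoC_plus. simpl Cpow. ring.
Qed.


Lemma sumC_ext n F G : (forall r, (r < n)%nat -> F r = G r) -> sumC n F = sumC n G.
Proof. induction n; intros H; simpl; auto. rewrite IHn by (intros; apply H; lia). rewrite H by lia. reflexivity. Qed.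
Lemma sumC_plus n F G : sumC n (fun r => F r + G r)%C = (sumC n F + sumC n G)%C.
Proof. induction n; simpl. ring. rewrite IHn. ring. Qed.
Lemma sumC_scal n c F : (c * sumC n F)%C = sumC n (fun r => c * F r)%C.
Proof. induction n; simpl. ring. rewrite <- IHn. ring. Qed.
Lemma sumC_first n F : sumC (S n) F = (F O + sumC n (fun r => F (S r)))%C.
Proof. induction n; simpl. ring. simpl in IHn. rewrite IHn. ring. Qed.
Lemma sumC_last n F : sumC (S n) F = (sumC n F + F n)%C.
Proof. reflexivity. Qed.
Lemma sumC_zero n : sumC n (fun _ => RtoC 0) = RtoC 0.
Proof. induction n; simpl; auto. rewrite IHn. ring. Qed.

Lemma sumC_comb n c F G : sumC n (fun r => c * (F r - Ci * G r))%C = (c * (sumC n F - Ci * sumC n G))%C.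
Proof. induction n; simpl; [ring| rewrite IHn; ring]. Qed.
Lemma sumC_comb' n c F G : sumC n (fun r => c * (F r + Ci * G r))%C = (c * (sumC n F + Ci * sumC n G))%C.
Proof. induction n; simpl; [ring| rewrite IHn; ring]. Qed.

Lemma dtau1_sum n T a b : (forall r, (r < n)%nat -> exL U1 (T r) a b /\ exL V1 (T r) a b) ->
  dtau1 (fun a b => sumC n (fun r => T r a b)) a b = sumC n (fun r => dtau1 (T r) a b).
Proof.
  intros H. unfold dtau1. rewrite !pd_sum by (intros; apply H; auto).
  symmetry. apply sumC_comb.
Qed.

Lemma dtaubar1_sum n T a b : (forall r, (r < n)%nat -> exL U1 (T r) a b /\ exL V1 (T r) a b) ->
  dtaubar1 (fun a b => sumC n (fun r => T r a b)) a b = sumC n (fun r => dtaubar1 (T r) a b).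
Proof.
  intros H. unfold dtaubar1. rewrite !pd_sum by (intros; apply H; auto).
  symmetry. apply sumC_comb'.
Qed.

Fixpoint rc (k : R) (j r : nat) : R :=
  match j with
  | O => match r with O => 1 | S _ => 0 end
  | S j' => rc k j' r * (k + INR j' + INR r) + match r with O => 0 | S r' => rc k j' r' end
  end.

Lemma rc_zero k j r : (j < r)%nat -> rc k j r = 0.
Proof.
  revert r. induction j; intros r H; simpl.
  - destruct r; [lia|reflexivity].
  - rewrite IHj by lia. destruct r; [lia|]. rewrite IHj by lia. ring.
Qed.

Definition S1 (f : C -> C -> C) : Prop :=
  forall r a b, inH2 a b -> exL U1 (dtau1n r f) a b /\ exL V1 (dtau1n r f) a b.

Lemma Sm_S1 f : Sm f -> S1 f.
Proof. intros H r a b Hab. split; apply Sm_exL; auto; apply Sm_dtau1n; auto. Qed.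

Definition CF (k : R) (j : nat) (f : C -> C -> C) : C -> C -> C :=
  fun a b => sumC (S j) (fun r => (RtoC 2 * Ci) ^ r * RtoC (rc k j r) * (wp (j - r) a b * dtau1n r f a b))%C.

Lemma M3 k j f : S1 f -> eqH (Rit1 k j f) (CF (IZR k) j f).
Proof.
  intros Hf. induction j as [|j IH].
  - intros a b _. unfold CF, wp. simpl. ring.
  - intros a b Hab. change (Rit1 k (S j) f) with (Defs.R1 (k + 2 * Z.of_nat j) (Rit1 k j f)). unfold Defs.R1.
    rewrite ((proj1 good_dtau1) _ _ IH a b Hab), (IH a b Hab).
    destruct (Hab) as [Ha Hb].
    unfold CF at 1. rewrite dtau1_sum.
    2:{ intros r _. destruct (Hf r a b Hab) as [E1 E2]. split; apply exL_scal; apply exL_wm; auto. }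
    rewrite (sumC_ext _ _ (fun r => (RtoC 2 * Ci) ^ r * RtoC (rc (IZR k) j r) *
       (wp (j - r) a b * dtau1n (S r) f a b +
        Ci * RtoC (INR (j - r)) * RtoC (/ 2) * RtoC (/ Im a) * wp (j - r) a b * dtau1n r f a b))%C).
    2:{ intros r _. destruct (Hf r a b Hab) as [E1 E2].
        rewrite (dtau1_cb (fun _ => ((RtoC 2 * Ci) ^ r * RtoC (rc (IZR k) j r))%C)).
        2,3: apply exL_wm; auto.
        rewrite dtau1_wm by auto. reflexivity. }
    unfold CF. rewrite !sumC_scal, <- sumC_plus.
    rewrite (sumC_ext (S (S j)) _ (fun r =>
        (RtoC 2 * Ci) ^ r * RtoC (rc (IZR k) j r * (IZR k + INR j + INR r)) * (wp (S j - r) a b * dtau1n r f a b) +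
        (RtoC 2 * Ci) ^ r * RtoC (match r with O => 0 | S r' => rc (IZR k) j r' end) * (wp (S j - r) a b * dtau1n r f a b))%C).
    2:{ intros r _. simpl rc. rewrite RtoC_plus. ring. }
    rewrite (sumC_plus (S (S j))).
    match goal with |- _ = (sumC (S (S j)) ?P + sumC (S (S j)) ?Q)%C =>
      rewrite (sumC_last (S j) P), (sumC_first (S j) Q) end.
    cbv beta.
    rewrite (rc_zero _ j (S j)) by lia. rewrite Rmult_0_l.
    match goal with |- _ = (?x + ?y + (?z + ?w))%C => 
      replace y with (RtoC 0) by ring;
      replace z with (RtoC 0) by ring end.
    rewrite Cplus_0_r, Cplus_0_l, <- (sumC_plus (S j)).
    apply sumC_ext. intros r Hr.
    replace (S j - r)%nat with (S (j - r)) by lia.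
    replace (wp (S (j - r)) a b) with (RtoC (/ Im a) * wp (j - r) a b)%C by (unfold wp; rewrite <- RtoC_mult; reflexivity).
    rewrite minus_INR by lia.
    rewrite plus_IZR, mult_IZR, <- INR_IZR_INZ.
    unfold Rdiv. change (S j - S r)%nat with (j - r)%nat.
    repeat (rewrite RtoC_mult || rewrite RtoC_plus || rewrite RtoC_minus).
    simpl Cpow.
    rewrite (RtoC_inv 2) by lra. field [Ci2].
Qed.


Lemma rising_shift y s : rising y (S s) = y * rising (y + 1) s.
Proof.
  induction s. simpl; ring.
  change (rising y (S (S s))) with (rising y (S s) * (y + INR (S s))). rewrite IHs.
  change (rising (y+1) (S s)) with (rising (y+1) s * (y + 1 + INR s)). rewrite S_INR. ring.
Qed.

Lemma falling_add z a b : falling z (a + b) = falling z a * falling (z - INR a) b.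
Proof.
  induction b. rewrite Nat.add_0_r. simpl. ring.
  rewrite Nat.add_succ_r. simpl. rewrite IHb. rewrite plus_INR. ring.
Qed.

Lemma falling_rising y s : falling (y + INR s - 1) s = rising y s.
Proof.
  revert y. induction s; intros y. reflexivity.
  change (falling (y + INR (S s) - 1) (S s)) with (falling (y + INR (S s) - 1) s * (y + INR (S s) - 1 - INR s)).
  replace (y + INR (S s) - 1) with ((y + 1) + INR s - 1) by (rewrite S_INR; ring).
  rewrite IHs. rewrite rising_shift. ring.
Qed.

Lemma fact_pos n : 0 < INR (fact n).
Proof. apply lt_0_INR. apply lt_O_fact. Qed.

Lemma rc_SS k j r : rc k (S j) (S r) = rc k j (S r) * (k + INR j + INR (S r)) + rc k j r.
Proof. reflexivity. Qed.

Lemma rc_closed k j : forall r n, (r + n = j)%nat ->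
  rc k j r = INR (fact j) / (INR (fact r) * INR (fact n)) * rising (k + INR r) n.
Proof.
  induction j; intros r n Hrn.
  - assert (r = 0%nat) by lia. assert (n = 0%nat) by lia. subst. simpl. field.
  - destruct r as [|r'].
    + simpl rc. rewrite (IHj 0%nat j) by lia. assert (n = S j) by lia. subst n.
      change (INR 0) with 0. change (fact 0) with 1%nat. change (INR 1) with 1.
      change (rising (k + 0) (S j)) with (rising (k+0) j * (k + 0 + INR j)).
      pose proof (fact_pos j). pose proof (fact_pos (S j)). field. lra.
    + destruct n as [|n'].
      * assert (r' = j) by lia. subst r'. simpl rc.
        rewrite (rc_zero k j (S j)) by lia. rewrite (IHj j 0%nat) by lia.
        pose proof (fact_pos j). pose proof (fact_pos (S j)).
        simpl rising. simpl (fact 0). simpl (INR 1). field. lra.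
      * rewrite rc_SS. rewrite (IHj (S r') n') by lia. rewrite (IHj r' (S n')) by lia.
        assert (Hj : INR j = INR r' + INR n' + 1) by (replace j with (r' + S n')%nat by lia; rewrite plus_INR, S_INR; ring).
        rewrite (rising_shift (k + INR r') n').
        change (rising (k + INR (S r')) (S n')) with (rising (k + INR (S r')) n' * (k + INR (S r') + INR n')).
        replace (k + INR r' + 1) with (k + INR (S r')) by (rewrite S_INR; ring).
        set (P := rising (k + INR (S r')) n').
        rewrite !fact_simpl. rewrite !mult_INR.
        pose proof (fact_pos r'). pose proof (fact_pos n'). pose proof (fact_pos j).
        rewrite !S_INR. rewrite Hj. pose proof (pos_INR r'). pose proof (pos_INR n').
        field. repeat split; lra.
Qed.

Lemma R_id x y s n :
  gbinom (x + INR (s + n) - 1) s * gbinom (y + INR (s + n) - 1) n * rising y s =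
  gbinom (y + INR (s + n) - 1) (s + n) * rc x (s + n) n.
Proof.
  rewrite (rc_closed x (s + n) n s) by lia.
  unfold gbinom.
  replace (x + INR (s + n) - 1) with ((x + INR n) + INR s - 1) by (rewrite plus_INR; ring).
  rewrite (falling_rising (x + INR n) s).
  replace (falling (y + INR (s + n) - 1) (s + n)) with (falling (y + INR (s + n) - 1) (n + s))
    by (rewrite Nat.add_comm; reflexivity).
  rewrite falling_add.
  replace (y + INR (s + n) - 1 - INR n) with (y + INR s - 1) by (rewrite plus_INR; ring).
  rewrite falling_rising.
  pose proof (fact_pos s). pose proof (fact_pos n). pose proof (fact_pos (s + n)).
  field. lra.
Qed.


Definition two_i : C := (RtoC 2 * Ci)%C.
Definition half_i : C := (Ci * RtoC (/ 2))%C.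

Lemma tiHi : (two_i * half_i = RtoC (-1))%C.
Proof. unfold two_i, half_i, Ci. apply injective_projections; simpl; field. Qed.

Lemma Sc0 j : (Cpow (RtoC (-4 * PI)) j * Cinv (Cpow (RtoC (2 * PI) * Ci) j) = Cpow two_i j)%C.
Proof.
  assert (E : RtoC (-4 * PI) = (two_i * (RtoC (2 * PI) * Ci))%C).
  { unfold two_i, Ci. apply injective_projections; simpl; ring. }
  assert (Hnz : (RtoC (2 * PI) * Ci)%C <> RtoC 0).
  { apply Cmult_neq_0. apply RtoC_neq0. pose proof PI_RGT_0; lra. apply Ci_nz. }
  rewrite E, Cpow_mult_l. field. apply Cpow_nz. exact Hnz.
Qed.

Lemma termA (k1 k2 : Z) j s n (Hj : j = (s + n)%nat) (W X : C) :
  (two_i ^ j * (RtoC ((-1) ^ s * gbinom (IZR k1 + INR j - 1) s * gbinom (IZR k2 + INR j - 1) (j - s)) *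
     (W * (half_i ^ (j - s) * RtoC (rising (IZR k1) (j - s)) * X))))%C
  = (RtoC ((-1) ^ j * gbinom (IZR k1 + INR j - 1) j) * (two_i ^ s * RtoC (rc (IZR k2) j s) * (W * X)))%C.
Proof.
  subst j. replace (s + n - s)%nat with n by lia.
  pose proof (R_id (IZR k2) (IZR k1) n s) as E. rewrite (Nat.add_comm n s) in E.
  apply (f_equal RtoC) in E. rewrite !RtoC_mult in E.
  assert (P : (two_i ^ n * half_i ^ n = RtoC (-1) ^ n)%C) by (rewrite <- Cpow_mult_l, tiHi; reflexivity).
  rewrite !RtoC_mult, !RtoC_pow, !Cpow_add_r.
  ring [P E].
Qed.

Lemma termB (k1 k2 : Z) j r m (Hj : j = (m + r)%nat) (W Y cL : C) :
  (two_i ^ j * (RtoC ((-1) ^ (j - r) * gbinom (IZR k1 + INR j - 1) (j - r) * gbinom (IZR k2 + INR j - 1) r) *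
     (W * (half_i ^ (j - r) * RtoC (rising (IZR k2) (j - r)) * Y))) * cL)%C
  = (RtoC (gbinom (IZR k2 + INR j - 1) j) * (two_i ^ r * RtoC (rc (IZR k1) j r) * (W * (cL * Y))))%C.
Proof.
  subst j. replace (m + r - r)%nat with m by lia.
  pose proof (R_id (IZR k1) (IZR k2) m r) as E.
  apply (f_equal RtoC) in E. rewrite !RtoC_mult in E.
  assert (P : (two_i ^ m * half_i ^ m = RtoC (-1) ^ m)%C) by (rewrite <- Cpow_mult_l, tiHi; reflexivity).
  assert (Q : (RtoC (-1) ^ m * RtoC (-1) ^ m = RtoC 1)%C).
  { rewrite <- Cpow_mult_l. replace (RtoC (-1) * RtoC (-1))%C with (RtoC 1).
    apply Cpow_1_l. rewrite <- RtoC_mult. f_equal. ring. }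
  rewrite !RtoC_mult, !RtoC_pow, !Cpow_add_r.
  ring [P Q E].
Qed.

Lemma fold_sumC (F : nat -> C) n m :
  fold_right Cplus (RtoC 0) (map F (seq m n)) = sumC n (fun r => F (m + r)%nat).
Proof.
  revert m. induction n; intros m. reflexivity.
  simpl (seq m (S n)). simpl map. simpl fold_right. rewrite IHn. rewrite sumC_first.
  rewrite Nat.add_0_r. f_equal. apply sumC_ext; intros; f_equal; lia.
Qed.

Lemma sumC_rev n F : sumC n F = sumC n (fun r => F (n - S r)%nat).
Proof.
  induction n. reflexivity.
  rewrite (sumC_first n (fun r => F (S n - S r)%nat)). replace (S n - 1)%nat with n by lia.
  rewrite sumC_last, IHn. rewrite Cplus_comm. reflexivity.
Qed.

Lemma dtau1n_ext n f g : eqH f g -> eqH (dtau1n n f) (dtau1n n g).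
Proof. rewrite !dtau1n_iter. apply (good_iter _ n good_dtau1). Qed.
Lemma dtau2n_ext n f g : eqH f g -> eqH (dtau2n n f) (dtau2n n g).
Proof. rewrite !dtau2n_iter. apply (good_iter _ n good_dtau2). Qed.

Lemma W_scal' c1 d1 c2 d2 (K : C) h a b : exL d1 h a b -> exL d2 h a b ->
  Wop c1 d1 c2 d2 (fun a b => K * h a b)%C a b = (K * Wop c1 d1 c2 d2 h a b)%C.
Proof. intros. unfold Wop. rewrite !pd_scal by auto. ring. Qed.

Lemma W_sum' c1 d1 c2 d2 n T a b : (forall r, (r < n)%nat -> exL d1 (T r) a b /\ exL d2 (T r) a b) ->
  Wop c1 d1 c2 d2 (fun a b => sumC n (fun r => T r a b)) a b = sumC n (fun r => Wop c1 d1 c2 d2 (T r) a b).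
Proof.
  intros H. unfold Wop. rewrite !pd_sum by (intros; apply H; auto).
  rewrite !sumC_scal, <- sumC_plus. reflexivity.
Qed.

Definition wp2 (m : nat) : C -> C -> C := fun _ b => RtoC ((/ Im b) ^ m).

Lemma M2b_swap k g m : Sm g -> eqH (Delta2 k g) (fun _ _ => RtoC 0) ->
  eqH (dtau2n m (dtaubar2 g))
      (fun a b => wp2 m a b * ((Ci * RtoC (/ 2)) ^ m * RtoC (rising (IZR k) m) * dtaubar2 g a b))%C.
Proof.
  intros Hg HD.
  assert (HD' : eqH (Delta1 k (swap g)) (fun _ _ => RtoC 0)).
  { intros a b Hab. rewrite Delta1_swap. unfold swap. apply HD, inH2_swap; auto. }
  pose proof (eqH_swap _ _ (M2b k (swap g) m (Sm_swap g Hg) HD')) as H.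
  rewrite dtaubar1_swap, dtau1n_swap in H. exact H.
Qed.


Lemma final_alg (P K cL SA SB R1 R2 G1 G2 : C) :
  (P * (K * SA) = G1 * R2)%C -> (P * (K * SB) * cL = G2 * R1)%C ->
  (P * (cL * (K * SA + K * SB)) = G2 * R1 + G1 * (cL * R2))%C.
Proof. intros H H0. transitivity (cL * (P * (K * SA)) + P * (K * SB) * cL)%C; [ring|]. rewrite H, H0; ring. Qed.

Theorem proposition5p8 (D k1 k2 : Z) (g : C -> C -> C)
  (HD : (1 < D)%Z) (HDsq : squarefreeZ D)
  (Hg : smooth_HMF D k1 k2 g)
  (H1 : forall a b : C, inH2 a b -> Delta1 k1 g a b = RtoC 0)
  (H2 : forall a b : C, inH2 a b -> Delta2 k2 g a b = RtoC 0) :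
  forall (j : nat) (t : C), inH t ->
    (Cpow (RtoC (-4 * PI)) j * Lop (Cohen k1 k2 j g) t)%C =
    (RtoC (gbinom (IZR k2 + INR j - 1) j) * Rit1 k1 j (L2 g) t t
     + RtoC ((-1) ^ j * gbinom (IZR k1 + INR j - 1) j) * L1 (Rit2 k2 j g) t t)%C.
Proof.
  intros j t Ht.
  destruct Hg as [Hsm _]. pose proof (smooth_Sm g Hsm) as Sg.
  assert (Htt : inH2 t t) by (split; auto).
  assert (SA : Sm (dtaubar1 g)) by (apply good_dtaubar1; auto).
  assert (SB : Sm (dtaubar2 g)) by (apply good_dtaubar2; auto).
  assert (SPs : forall s, Sm (fun a b => RtoC ((-1) ^ s * gbinom (IZR k1 + INR j - 1) s * gbinom (IZR k2 + INR j - 1) (j - s)) * dtau1n (j - s) (dtau2n s g) a b)%C).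
  { intros s. apply Sm_scal, Sm_dtau1n, Sm_dtau2n; auto. }
  set (Phi := fun a b => (Cinv (Cpow (RtoC (2 * PI) * Ci) j) *
      sumC (S j) (fun s => RtoC ((-1) ^ s * gbinom (IZR k1 + INR j - 1) s * gbinom (IZR k2 + INR j - 1) (j - s)) * dtau1n (j - s) (dtau2n s g) a b))%C).
  assert (ECo : Cohen k1 k2 j g = fun t => Phi t t).
  { apply functional_extensionality; intro t'. unfold Cohen, Phi. rewrite fold_sumC. reflexivity. }
  assert (SSum : Sm (fun a b => sumC (S j) (fun s => RtoC ((-1) ^ s * gbinom (IZR k1 + INR j - 1) s * gbinom (IZR k2 + INR j - 1) (j - s)) * dtau1n (j - s) (dtau2n s g) a b)%C)).
  { apply Sm_sum. intros; apply SPs. }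
  assert (SPhi : Sm Phi) by (unfold Phi; apply Sm_scal; auto).
  rewrite ECo.
  assert (ELop : Lop (fun t => Phi t t) t = (RtoC (-2) * Ci * RtoC (Im t ^ 2) * (dtaubar1 Phi t t + dtaubar2 Phi t t))%C).
  { unfold Lop, dtaubar. rewrite diag_du, diag_dv by auto. unfold dtaubar1, dtaubar2. ring. }
  rewrite ELop.
  set (K := Cinv (Cpow (RtoC (2 * PI) * Ci) j)).
  assert (EP1 : dtaubar1 Phi t t = (K * sumC (S j) (fun s =>
      RtoC ((-1) ^ s * gbinom (IZR k1 + INR j - 1) s * gbinom (IZR k2 + INR j - 1) (j - s)) *
      (wp (j - s) t t * (half_i ^ (j - s) * RtoC (rising (IZR k1) (j - s)) * dtau2n s (dtaubar1 g) t t))))%C).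
  { unfold Phi. rewrite (dtaubar1_cb (fun _ => K)). 2,3: apply Sm_exL; auto.
    f_equal. rewrite dtaubar1_sum. 2:{ intros; split; apply Sm_exL; auto. }
    apply sumC_ext. intros s Hs.
    rewrite (dtaubar1_cb (fun _ => RtoC ((-1) ^ s * gbinom (IZR k1 + INR j - 1) s * gbinom (IZR k2 + INR j - 1) (j - s))))
      by (apply Sm_exL; auto; apply Sm_dtau1n, Sm_dtau2n; auto).
    f_equal.
    assert (EQ : eqH (dtaubar1 (dtau1n (j - s) (dtau2n s g)))
       (fun a b => wp (j - s) a b * (half_i ^ (j - s) * RtoC (rising (IZR k1) (j - s)) * dtau2n s (dtaubar1 g) a b))%C).
    { eapply eqH_trans. apply comm_bar1_12; auto.
      eapply eqH_trans. apply dtau2n_ext, (M2b k1 g (j - s) Sg H1).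
      eapply eqH_trans. apply (M1' s (fun a => RtoC ((/ Im a) ^ (j - s))) (fun a b => (half_i ^ (j - s) * RtoC (rising (IZR k1) (j - s)) * dtaubar1 g a b)%C)).
      apply Sm_scal; auto.
      intros a b Hab. unfold wp. f_equal.
      apply (M1' s (fun _ => (half_i ^ (j - s) * RtoC (rising (IZR k1) (j - s)))%C) (dtaubar1 g)); auto. }
    apply EQ; auto. }
  assert (EP2 : dtaubar2 Phi t t = (K * sumC (S j) (fun s =>
      RtoC ((-1) ^ s * gbinom (IZR k1 + INR j - 1) s * gbinom (IZR k2 + INR j - 1) (j - s)) *
      (wp2 s t t * (half_i ^ s * RtoC (rising (IZR k2) s) * dtau1n (j - s) (dtaubar2 g) t t))))%C).
  { unfold Phi. rewrite dtaubar2_W. rewrite W_scal'. 2,3: apply Sm_exL; auto.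
    f_equal. rewrite W_sum'. 2:{ intros; split; apply Sm_exL; auto. }
    apply sumC_ext. intros s Hs.
    rewrite W_scal' by (apply Sm_exL; auto; apply Sm_dtau1n, Sm_dtau2n; auto).
    rewrite <- dtaubar2_W.
    f_equal.
    assert (EQ : eqH (dtaubar2 (dtau1n (j - s) (dtau2n s g)))
       (fun a b => wp2 s a b * (half_i ^ s * RtoC (rising (IZR k2) s) * dtau1n (j - s) (dtaubar2 g) a b))%C).
    { eapply eqH_trans. apply comm_bar2_12; auto.
      eapply eqH_trans. apply dtau1n_ext, (M2b_swap k2 g s Sg H2).
      eapply eqH_trans. apply (M1 (j - s) (fun b => RtoC ((/ Im b) ^ s)) (fun a b => (half_i ^ s * RtoC (rising (IZR k2) s) * dtaubar2 g a b)%C)).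
      apply Sm_scal; auto.
      intros a b Hab. unfold wp2. f_equal.
      apply (M1 (j - s) (fun _ => (half_i ^ s * RtoC (rising (IZR k2) s))%C) (dtaubar2 g)); auto. }
    apply EQ; auto. }
  set (cL := (RtoC (-2) * Ci * RtoC (Im t ^ 2))%C).
  assert (S1L : S1 (L2 g)).
  { intros r a b Hab.
    pose proof (M1 r (fun b => (RtoC (-2) * Ci * RtoC (Im b ^ 2))%C) (dtaubar2 g) SB) as E.
    split; eapply exL_ext; try (apply eqH_sym; exact E); auto;
      apply exL_cbm; auto; apply Sm_exL; auto; apply Sm_dtau1n; auto. }
  assert (ER1 : Rit1 k1 j (L2 g) t t = sumC (S j) (fun r =>
      two_i ^ r * RtoC (rc (IZR k1) j r) * (wp (j - r) t t * (cL * dtau1n r (dtaubar2 g) t t)))%C).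
  { rewrite (M3 k1 j (L2 g) S1L t t Htt). unfold CF. apply sumC_ext. intros r Hr.
    f_equal. f_equal.
    apply (M1 r (fun b => (RtoC (-2) * Ci * RtoC (Im b ^ 2))%C) (dtaubar2 g) SB t t Htt). }
  assert (ERit2 : eqH (Rit2 k2 j g) (fun a b => sumC (S j) (fun r =>
      (two_i ^ r * RtoC (rc (IZR k2) j r) * wp2 (j - r) a b) * dtau2n r g a b))%C).
  { intros a b Hab. change (Rit2 k2 j g a b) with (swap (Rit2 k2 j g) b a). rewrite <- Rit1_swap.
    rewrite (M3 k2 j (swap g) (Sm_S1 _ (Sm_swap g Sg)) b a (inH2_swap _ _ Hab)).
    unfold CF. apply sumC_ext; intros r _. rewrite dtau1n_swap. unfold swap, wp, wp2, two_i. ring. }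
  assert (ER2 : L1 (Rit2 k2 j g) t t = (cL * sumC (S j) (fun r =>
      (two_i ^ r * RtoC (rc (IZR k2) j r) * wp2 (j - r) t t) * dtau2n r (dtaubar1 g) t t))%C).
  { unfold L1. fold cL. f_equal.
    rewrite ((proj1 good_dtaubar1) _ _ ERit2 t t Htt).
    rewrite dtaubar1_sum.
    2:{ intros r _. split; apply (exL_cbm _ (fun b => (two_i ^ r * RtoC (rc (IZR k2) j r) * RtoC ((/ Im b) ^ (j - r)))%C));
        auto; apply Sm_exL; auto; apply Sm_dtau2n; auto. }
    apply sumC_ext. intros r _.
    rewrite (dtaubar1_cb (fun b => (two_i ^ r * RtoC (rc (IZR k2) j r) * RtoC ((/ Im b) ^ (j - r)))%C))
      by (apply Sm_exL; auto; apply Sm_dtau2n; auto).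
    f_equal. apply (comm_bar1_12 0 r g Sg t t Htt). }
  rewrite ER1, ER2, EP1, EP2.
  apply final_alg.
  - unfold K. rewrite Cmult_assoc, Sc0.
    rewrite !sumC_scal. apply sumC_ext. intros s Hs.
    rewrite (termA k1 k2 j s (j - s)) by lia.
    unfold wp, wp2. ring.
  - unfold K. rewrite Cmult_assoc, Sc0.
    rewrite (sumC_rev (S j)). cbv beta.
    rewrite Cmult_comm, !sumC_scal. apply sumC_ext. intros r Hr.
    change (S j - S r)%nat with (j - r)%nat.
    replace (j - (j - r))%nat with r by lia.
    rewrite Cmult_comm.
    rewrite (termB k1 k2 j r (j - r)) by lia.
    unfold wp, wp2. ring.
Qed.
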